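(* Let $\Gamma$ be a finite simplicial graph and let $v_1,v_2,v_3$ be three consecutive vertices of a path in $\Gamma$ with $d(v_1,v_3)=2$. Let $f$ be a conjugating automorphism of $A_\Gamma$ with $f(v_1)=v_1$. Then $f(v_2)$ is represented by a reduced word $wv_2w^{-1}$ with $w\in\langle\mathrm{lk}(v_1)\rangle$, and $f(v_3)$ is represented by a reduced word $xyv_3y^{-1}x^{-1}$ with $x\in\langle\mathrm{lk}(v_1)\rangle$ and $y\in\langle\mathrm{st}(v_2)\rangle$.
   Context: $A_\Gamma$ is the right-angled Artin group with generators $V\Gamma$ and relations $[a,b]=1$ for edges $\{a,b\}$. $\mathrm{lk}(v)$ is the subgraph induced by the neighbours of $v$, $\mathrm{st}(v)$ that induced by $\mathrm{lk}(v)\cup\{v\}$, and for a subgraph $S$, $\langle S\rangle$ is the subgroup generated by its vertices. A word is reduced if it has minimal length among words representing the same element. An automorphism is conjugating if it maps each vertex generator to a conjugate of itself. *)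

(* Defs.v *)
From mathcomp Require Import all_boot.
From Stdlib Require Import Relations.Relation_Operators.
Set Implicit Arguments. Unset Strict Implicit. Unset Printing Implicit Defensive.

Section RAAG.
Variables (T : finType) (e : rel T).

(* a letter (v, true) is the generator v, (v, false) is v^{-1} *)
Definition letter := (T * bool)%type.
Definition word := seq letter.

Definition linv (a : letter) : letter := (a.1, ~~ a.2).
Definition winv (w : word) : word := rev (map linv w).
Definition gen (v : T) : word := [:: (v, true)].

Inductive raag_step : word -> word -> Prop :=
| step_cancel u v a : raag_step (u ++ [:: a; linv a] ++ v) (u ++ v)
| step_comm u v a b : e a.1 b.1 -> raag_step (u ++ [:: a; b] ++ v) (u ++ [:: b; a] ++ v).

Definition raag_eq : word -> word -> Prop := clos_refl_sym_trans word raag_step.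

Definition reduced (w : word) : Prop :=
  forall w', raag_eq w w' -> size w <= size w'.

Definition ext (phi : T -> word) (w : word) : word :=
  flatten (map (fun a : letter => if a.2 then phi a.1 else winv (phi a.1)) w).

Definition is_automorphism (phi : T -> word) : Prop :=
  (forall a b, e a b -> raag_eq (phi a ++ phi b) (phi b ++ phi a)) /\
  (forall u u', raag_eq (ext phi u) (ext phi u') -> raag_eq u u') /\
  (forall w, exists u, raag_eq (ext phi u) w).

Definition conjugating (phi : T -> word) : Prop :=
  forall v, exists g, raag_eq (phi v) (g ++ gen v ++ winv g).

Definition word_over (S : pred T) (w : word) : bool := all (fun a => S a.1) w.

Definition in_subgroup (S : pred T) (w : word) : Prop :=
  exists u, word_over S u /\ raag_eq w u.

Definition lk (v : T) : pred T := fun x => e v x.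
Definition st (v : T) : pred T := fun x => (x == v) || e v x.

End RAAG.

(* Main.v *)
Require Import Defs.
From mathcomp Require Import all_boot.
From Stdlib Require Import Relations.Relation_Operators Relations.Operators_Properties Classical.
Set Implicit Arguments. Unset Strict Implicit. Unset Printing Implicit Defensive.

Section Basics.
Variables (T : finType) (e : rel T).
Hypothesis e_sym : symmetric e.
Hypothesis e_irr : irreflexive e.

Local Notation word := (word T).
Local Notation req := (raag_eq e).

Lemma linvK (a : letter T) : linv (linv a) = a.
Proof. by case: a => x b; rewrite /linv /= negbK. Qed.

Lemma winv_cat (u v : word) : winv (u ++ v) = winv v ++ winv u.
Proof. by rewrite /winv map_cat rev_cat. Qed.

Lemma winv_cons a (u : word) : winv (a :: u) = winv u ++ [:: linv a].
Proof. by rewrite /winv /= rev_cons cats1. Qed.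

Lemma winvK (u : word) : winv (winv u) = u.
Proof.
rewrite /winv map_rev revK -map_comp.
by elim: u => //= a u ->; rewrite linvK.
Qed.

Lemma size_winv (u : word) : size (winv u) = size u.
Proof. by rewrite /winv size_rev size_map. Qed.

Lemma all_winv (P : pred T) (u : word) :
  all (fun a => P a.1) (winv u) = all (fun a => P a.1) u.
Proof. by rewrite /winv all_rev all_map. Qed.

Lemma winv_gen (v : T) : winv (gen v) = [:: (v, false)].
Proof. by []. Qed.

Lemma req_refl w : req w w. Proof. exact: rst_refl. Qed.
Lemma req_sym w w' : req w w' -> req w' w. Proof. exact: rst_sym. Qed.
Lemma req_trans w1 w2 w3 : req w1 w2 -> req w2 w3 -> req w1 w3.
Proof. exact: rst_trans. Qed.

Lemma step_ctx p q u u' : raag_step e u u' -> raag_step e (p ++ u ++ q) (p ++ u' ++ q).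
Proof.
case=> [u0 v0 a|u0 v0 a b hab].
- have := step_cancel e (p ++ u0) (v0 ++ q) a.
  by rewrite -?catA /=; rewrite -?catA /=.
- have := step_comm (p ++ u0) (v0 ++ q) hab.
  by rewrite -?catA /=; rewrite -?catA /=.
Qed.

Lemma req_ctx p q u u' : req u u' -> req (p ++ u ++ q) (p ++ u' ++ q).
Proof.
elim=> [x y s|x|x y _ IH|x y z _ IH1 _ IH2].
- by apply: rst_step; apply: step_ctx.
- exact: req_refl.
- exact: req_sym.
- exact: req_trans IH1 IH2.
Qed.

Lemma req_cat u u' v v' : req u u' -> req v v' -> req (u ++ v) (u' ++ v').
Proof.
move=> h1 h2; apply: (@req_trans _ (u' ++ v)).
- by have := req_ctx [::] v h1; rewrite /=.
- by have := req_ctx u' [::] h2; rewrite !cats0.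
Qed.

Lemma step_winv u u' : raag_step e u u' -> raag_step e (winv u) (winv u').
Proof.
case=> [u0 v0 a|u0 v0 a b hab].
- rewrite !winv_cat /= !winv_cons /= -!catA /=.
  have := step_cancel e (winv v0) (winv u0) (linv (linv a)).
  by rewrite linvK.
- rewrite !(winv_cat, winv_cons) /= -!catA /=.
  apply: step_comm; by rewrite /= e_sym.
Qed.

Lemma req_winv u u' : req u u' -> req (winv u) (winv u').
Proof.
elim=> [x y s|x|x y _ IH|x y z _ IH1 _ IH2].
- by apply: rst_step; apply: step_winv.
- exact: req_refl.
- exact: req_sym.
- exact: req_trans IH1 IH2.
Qed.

Lemma req_cancel (w : word) : req (w ++ winv w) [::].
Proof.
elim: w => [|a w IH] /=; first exact: req_refl.
rewrite winv_cons.
apply: (@req_trans _ [:: a; linv a]).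
  by have := req_ctx [:: a] [:: linv a] IH; rewrite /= -catA.
apply: rst_step; exact: (step_cancel e [::] [::] a).
Qed.

Lemma req_cancel' (w : word) : req (winv w ++ w) [::].
Proof. by have := req_cancel (winv w); rewrite winvK. Qed.

Lemma req_lcancel p x y : req (p ++ x) (p ++ y) -> req x y.
Proof.
move=> h.
have h' := req_ctx (winv p) [::] h; rewrite !cats0 !catA in h'.
apply: (req_trans _ (req_trans h' _)).
- have := req_ctx [::] x (req_cancel' p); rewrite /= => H; exact: req_sym H.
- have := req_ctx [::] y (req_cancel' p); by rewrite /=.
Qed.

Lemma req_rcancel p x y : req (x ++ p) (y ++ p) -> req x y.
Proof.
move=> h.
have h' := req_ctx [::] (winv p) h; rewrite /= -!catA in h'.
apply: (req_trans _ (req_trans h' _)).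
- have := req_ctx x [::] (req_cancel p); rewrite /= !cats0 => H.
  exact: req_sym H.
- have := req_ctx y [::] (req_cancel p); by rewrite /= !cats0.
Qed.


Lemma cat_cons_eq (X : Type) (p1 p2 r1 r2 : seq X) x1 x2 :
  p1 ++ x1 :: r1 = p2 ++ x2 :: r2 ->
  [\/ [/\ p1 = p2, x1 = x2 & r1 = r2],
      (exists s, p2 = p1 ++ x1 :: s /\ r1 = s ++ x2 :: r2) |
      (exists s, p1 = p2 ++ x2 :: s /\ r2 = s ++ x1 :: r1)].
Proof.
elim: p1 p2 => [|y p1 IH] [|z p2] /=; case.
- by move=> -> ->; constructor 1.
- by move=> -> ->; constructor 2; exists p2.
- by move=> -> <-; constructor 3; exists p1.
- move=> -> /IH [[-> -> ->]|[s [-> ->]]|[s [-> ->]]].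
  + by constructor 1.
  + by constructor 2; exists s.
  + by constructor 3; exists s.
Qed.

Ltac ceqn := do 4! (rewrite /= -?catA /= ?cats0).
Ltac ceq := ceqn; done.
Ltac cx := let H := fresh "H" in move=> H; move: H; ceqn => H; ceqn; exact: H.

Definition adjw (c : T) (m : word) := all (fun x : letter T => e c x.1) m.
Definition cstep (w w' : word) := exists p m q a,
  [/\ w = p ++ a :: m ++ linv a :: q, adjw a.1 m & w' = p ++ m ++ q].
Definition swap1 (w w' : word) := exists p q (a b : letter T),
  [/\ e a.1 b.1, w = p ++ a :: b :: q & w' = p ++ b :: a :: q].
Definition irr (w : word) := forall w', ~ cstep w w'.
Definition crt := clos_refl_trans word cstep.
Definition nf w u := crt w u /\ irr u.
Definition sst := clos_refl_trans word swap1.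

Lemma cstepI w w' p m q a : w = p ++ a :: m ++ linv a :: q -> w' = p ++ m ++ q ->
  adjw a.1 m -> cstep w w'.
Proof. by move=> -> -> h; exists p, m, q, a. Qed.

Lemma swap1I w w' p q (a b : letter T) : w = p ++ a :: b :: q -> w' = p ++ b :: a :: q ->
  e a.1 b.1 -> swap1 w w'.
Proof. by move=> -> -> h; exists p, q, a, b. Qed.

Lemma adjw_cat c u v : adjw c (u ++ v) = adjw c u && adjw c v.
Proof. exact: all_cat. Qed.

Lemma adjw_winv c u : adjw c (winv u) = adjw c u.
Proof. exact: (all_winv (e c)). Qed.

Lemma adjw_cons c x u : adjw c (x :: u) = e c x.1 && adjw c u.
Proof. by []. Qed.

Lemma cstep_size w w' : cstep w w' -> size w = (size w').+2.
Proof.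
by case=> p [m [q [a [-> _ ->]]]]; rewrite !size_cat /= size_cat /= !addnS.
Qed.

Lemma swap1_size w w' : swap1 w w' -> size w' = size w.
Proof. by case=> p [q [a [b [_ -> ->]]]]; rewrite !size_cat. Qed.

Lemma swap1_sym w w' : swap1 w w' -> swap1 w' w.
Proof. by case=> p [q [a [b [h -> ->]]]]; exists p, q, b, a; rewrite e_sym. Qed.

Lemma sst_sym w w' : sst w w' -> sst w' w.
Proof.
elim=> [x y s|x|x y z _ IH1 _ IH2].
- by apply: rt_step; apply: swap1_sym.
- exact: rt_refl.
- exact: rt_trans IH2 IH1.
Qed.

Lemma sst_size w w' : sst w w' -> size w' = size w.
Proof.
elim=> [x y s|x|x y z _ IH1 _ IH2] //; first exact: swap1_size.
by rewrite IH2 IH1.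
Qed.

Lemma move_right (a : letter T) m : adjw a.1 m ->
  forall p q, sst (p ++ a :: m ++ q) (p ++ m ++ a :: q).
Proof.
elim: m => [|x m IH] /= h p q; first exact: rt_refl.
case/andP: h => hx hm.
apply: rt_trans (_ : sst _ ((p ++ [:: x]) ++ a :: m ++ q)) _.
  apply: rt_step; apply: (swap1I (p:=p) (q:=m ++ q) (a:=a) (b:=x)) => //; by ceq.
have H := IH hm (p ++ [:: x]) q; move: H; ceqn => H; ceqn; exact: H.
Qed.

Lemma swap1_req w w' : swap1 w w' -> req w w'.
Proof.
case=> p [q [a [b [h -> ->]]]]; apply: rst_step.
exact: (step_comm p q h).
Qed.

Lemma sst_req w w' : sst w w' -> req w w'.
Proof.
elim=> [x y s|x|x y z _ IH1 _ IH2]; first exact: swap1_req.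
- exact: req_refl.
- exact: req_trans IH1 IH2.
Qed.

Lemma cstep_req w w' : cstep w w' -> req w w'.
Proof.
case=> p [m [q [a [-> hm ->]]]].
apply: req_trans (sst_req (move_right hm p (linv a :: q))) _.
apply: rst_step.
have := step_cancel e (p ++ m) q a; by rewrite -!catA.
Qed.

Ltac adjt :=
  repeat match goal with
  | H : is_true (adjw _ (_ ++ _)) |- _ => rewrite adjw_cat in H
  | H : is_true (adjw _ (_ :: _)) |- _ => rewrite adjw_cons in H
  | H : is_true (_ && _) |- _ =>
      let H1 := fresh "H" in let H2 := fresh "H" in case/andP: H => H1 H2
  end;
  rewrite ?adjw_cat ?adjw_cons /=; repeat (apply/andP; split); try done.

Lemma swap_step w w' z : swap1 w w' -> cstep w z ->
  exists z', cstep w' z' /\ (z = z' \/ swap1 z z').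
Proof.
case=> p [q [a [b [hab -> ->]]]] [p1 [m [q1 [c [E hm ->]]]]].
case: (cat_cons_eq E) => {E} [[E1 E2 E]|[s [E1 E]]|[s [E1 E]]].
- subst p1 c; case: m hm E => [|x m] hm E /=.
    by case: E => Eb _; rewrite Eb /= e_irr in hab.
  case: E => Ex Eq; subst x q.
  exists (p ++ b :: m ++ q1); split; last by left.
  apply: (cstepI (p:=p ++ [:: b]) (m:=m) (q:=q1) (a:=a)); try ceq; by adjt.
- subst p1; case: s E => [|x s] /= E.
    case: E => Ex Eq; subst c q.
    exists (p ++ a :: m ++ q1); split; last by left; ceq.
    apply: (cstepI (p:=p) (m:=a :: m) (q:=q1) (a:=b)); try ceq.
    by rewrite adjw_cons e_sym hab hm.
  case: E => Ex Eq; subst x q.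
  exists (p ++ b :: a :: s ++ m ++ q1); split.
    apply: (cstepI (p:=p ++ b :: a :: s) (m:=m) (q:=q1) (a:=c)) => //; ceq.
  right; apply: (swap1I (p:=p) (q:=s ++ m ++ q1) (a:=a) (b:=b)) => //; ceq.
- subst p; case: (cat_cons_eq E) => {E} [[E1 Ec E3]|[t [E1 E3]]|[t [E1 E]]].
  + subst m a q1; rewrite /= in hab.
    exists (p1 ++ s ++ b :: q); split; last by left; ceq.
    apply: (cstepI (p:=p1) (m:=s ++ [:: b]) (q:=q) (a:=c)); try ceq.
    by rewrite adjw_cat hm /= hab.
  + subst s q1; exists (p1 ++ m ++ t ++ b :: a :: q); split.
      apply: (cstepI (p:=p1) (m:=m) (q:=t ++ b :: a :: q) (a:=c)) => //; ceq.
    right; apply: (swap1I (p:=p1 ++ m ++ t) (q:=q) (a:=a) (b:=b)) => //; ceq.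
  + subst m; case: t E hm => [|y t] /= E hm.
      case: E => Eb Eq; subst b q.
      exists (p1 ++ s ++ a :: q1); split; last by left; ceq.
      apply: (cstepI (p:=p1) (m:=s) (q:=a :: q1) (a:=c)); try ceq; by adjt.
    case: E => Ey Eq; subst y q.
    exists (p1 ++ s ++ b :: a :: t ++ q1); split.
      apply: (cstepI (p:=p1) (m:=s ++ b :: a :: t) (q:=q1) (a:=c)); try ceq; by adjt.
    right; apply: (swap1I (p:=p1 ++ s) (q:=t ++ q1) (a:=a) (b:=b)) => //; ceq.
Qed.

Lemma oneside p1 a m1 q1 s b m2 q2 : adjw a.1 m1 -> adjw b.1 m2 ->
  m1 ++ linv a :: q1 = s ++ b :: m2 ++ linv b :: q2 ->
  [\/ p1 ++ m1 ++ q1 = (p1 ++ a :: s) ++ m2 ++ q2,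
      (exists y, cstep (p1 ++ m1 ++ q1) y /\ cstep ((p1 ++ a :: s) ++ m2 ++ q2) y) |
      sst (p1 ++ m1 ++ q1) ((p1 ++ a :: s) ++ m2 ++ q2)].
Proof.
move=> h1 h2 E; case: (cat_cons_eq E) => {E} [[E1 Eb E3]|[t [E1 E3]]|[t [E1 E]]].
- subst m1 b q1; constructor 3; apply: sst_sym.
  rewrite linvK -catA /=.
  have := @move_right a (s ++ m2) _ p1 q2; rewrite -!catA; apply.
  by rewrite /= in h2; rewrite adjw_cat h1 h2.
- subst s q1; constructor 2; exists (p1 ++ m1 ++ t ++ m2 ++ q2); split.
    apply: (cstepI (p:=p1 ++ m1 ++ t) (m:=m2) (q:=q2) (a:=b)) => //; ceq.
  apply: (cstepI (p:=p1) (m:=m1) (q:=t ++ m2 ++ q2) (a:=a)) => //; ceq.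
- subst m1; case: (cat_cons_eq E) => {E} [[Em Eab Eq]|[t' [E1' E2]]|[t' [E1' E2]]].
  + have Eab' : b = a by rewrite -(linvK b) Eab linvK.
    by move: h1; rewrite Eab' adjw_cat adjw_cons e_irr /= andbF.
  + subst t q2; constructor 2; exists (p1 ++ s ++ m2 ++ t' ++ q1); split.
      apply: (cstepI (p:=p1 ++ s) (m:=m2) (q:=t' ++ q1) (a:=b)) => //; ceq.
    apply: (cstepI (p:=p1) (m:=s ++ m2 ++ t') (q:=q1) (a:=a)); try ceq; by adjt.
  + subst m2 q1; constructor 2; exists (p1 ++ s ++ t ++ t' ++ q2); split.
      apply: (cstepI (p:=p1 ++ s) (m:=t ++ t') (q:=q2) (a:=b)); try ceq; by adjt.
    apply: (cstepI (p:=p1) (m:=s ++ t) (q:=t' ++ q2) (a:=a)); try ceq; by adjt.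
Qed.

Lemma overlap w z1 z2 : cstep w z1 -> cstep w z2 ->
  [\/ z1 = z2, (exists y, cstep z1 y /\ cstep z2 y) | sst z1 z2].
Proof.
case=> p1 [m1 [q1 [a [-> h1 ->]]]] [p2 [m2 [q2 [b [E h2 ->]]]]].
case: (cat_cons_eq E) => {E} [[E1 E2 E]|[s [E1 E]]|[s [E1 E]]].
- subst p2 b; case: (cat_cons_eq E) => {E} [[E1 _ E3]|[s [E1 _]]|[s [E1 _]]].
  + by subst m2 q2; constructor 1.
  + by subst m2; move: h2; rewrite adjw_cat adjw_cons /= e_irr /= andbF.
  + by subst m1; move: h1; rewrite adjw_cat adjw_cons /= e_irr /= andbF.
- subst p2; by case: (oneside p1 h1 h2 E) => [->|[y [? ?]]|?]; [constructor 1|constructor 2; exists y|constructor 3].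
- subst p1; case: (oneside p2 h2 h1 E) => [->|[y [? ?]]|?]; [constructor 1|constructor 2; exists y|constructor 3] => //.
  exact: sst_sym.
Qed.

Lemma crt_size w u : crt w u -> size u <= size w.
Proof.
elim=> [x y s|x|x y z _ IH1 _ IH2] //.
- by rewrite (cstep_size s); apply: leq_trans (leqnSn _) (leqnSn _).
- exact: leq_trans IH2 IH1.
Qed.

Lemma crt_first w u : crt w u -> w = u \/ exists z, cstep w z /\ crt z u.
Proof.
move/clos_rt_rt1n_iff => h; destruct h as [|y z s h]; first by left.
by right; exists y; split => //; apply/clos_rt_rt1n_iff.
Qed.

Lemma irr_crt w u : irr w -> crt w u -> u = w.
Proof. by move=> hi /crt_first [->|[z [s _]]] //; case: (hi z). Qed.

Lemma not_irr w : ~ irr w -> exists z, cstep w z.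
Proof. by move=> h; apply: NNPP => h'; apply: h => z hz; apply: h'; exists z. Qed.

Lemma nf_exists w : exists u, nf w u.
Proof.
move: {2}(size w) (leqnn (size w)) => n; elim: n w => [|n IH] w hw.
  have hi : irr w by move=> z /cstep_size; move: hw; rewrite leqn0 => /eqP ->.
  by exists w; split => //; apply: rt_refl.
case: (classic (irr w)) => hi; first by exists w; split => //; apply: rt_refl.
have [z hz] := not_irr hi.
have [u [c i]] : exists u, nf z u.
  by apply: IH; move: hw; rewrite (cstep_size hz) ltnS => /ltnW.
by exists u; split => //; apply: rt_trans (rt_step _ _ _ _ hz) c.
Qed.

Lemma nf_step w z u : cstep w z -> nf z u -> nf w u.
Proof. by move=> s [c i]; split => //; apply: rt_trans (rt_step _ _ _ _ s) c. Qed.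

Definition PP1 w := forall u1 u2, nf w u1 -> nf w u2 -> size u1 = size u2.
Definition PP2 w := forall w' u u', swap1 w w' -> nf w u -> nf w' u' -> size u = size u'.

Lemma nf_main n : forall w, size w < n -> PP1 w /\ PP2 w.
Proof.
elim: n => [//|n IH] w hw.
have chain : forall z1 z2, sst z1 z2 -> size z1 < n ->
    forall u1 u2, nf z1 u1 -> nf z2 u2 -> size u1 = size u2.
  move=> z1 z2 /clos_rt_rt1n_iff h; elim: h => [x|x y z hs _ IHc] hx u1 u2 n1 n2.
    exact: (IH x hx).1.
  have [uy ny] := nf_exists y.
  have hy : size y < n by rewrite (swap1_size hs).
  by rewrite ((IH x hx).2 y u1 uy hs n1 ny); apply: IHc.
have P1all : forall w0, size w0 <= n -> PP1 w0.
  move=> w0 hw0 u1 u2 [c1 i1] [c2 i2].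
  case: (classic (irr w0)) => hi.
    by rewrite (irr_crt hi c1) (irr_crt hi c2).
  case: (crt_first c1) => [E1|[z1 [s1 c1']]]; first by subst; case: hi.
  case: (crt_first c2) => [E2|[z2 [s2 c2']]]; first by subst; case: hi.
  have hz1 : size z1 < n by move: hw0; rewrite (cstep_size s1) => /ltnW.
  have hz2 : size z2 < n by move: hw0; rewrite (cstep_size s2) => /ltnW.
  case: (overlap s1 s2) => [E|[y [t1 t2]]|hs].
  - subst z2; exact: (IH z1 hz1).1 u1 u2 (conj c1' i1) (conj c2' i2).
  - have [uy ny] := nf_exists y.
    rewrite ((IH z1 hz1).1 u1 uy (conj c1' i1)); last exact: nf_step t1 ny.
    by rewrite ((IH z2 hz2).1 u2 uy (conj c2' i2)) //; exact: nf_step t2 ny.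
  - exact: chain hs hz1 u1 u2 (conj c1' i1) (conj c2' i2).
split; first exact: P1all.
move=> w' u u' hs n1 n2.
case: (classic (irr w)) => hi.
  have hi' : irr w'.
    move=> z' s'; have [z [s _]] := swap_step (swap1_sym hs) s'; exact: hi s.
  case: n1 n2 => [c1 _] [c2 _].
  by rewrite (irr_crt hi c1) (irr_crt hi' c2) (swap1_size hs).
have [z hz] := not_irr hi.
have [z' [hz' Ez]] := swap_step hs hz.
have [uz nz] := nf_exists z.
have [uz' nz'] := nf_exists z'.
rewrite (P1all w _ u uz) //; last exact: nf_step hz nz.
rewrite (P1all w' _ u' uz') //; first last.
- exact: nf_step hz' nz'.
- by rewrite (swap1_size hs).
have hzn : size z < n by move: hw; rewrite (cstep_size hz) ltnS => /ltnW.
case: Ez => [E|hzz]; first by subst z'; exact: (IH z hzn).1.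
exact: (IH z hzn).2 z' uz uz' hzz nz nz'.
Qed.

Lemma nfP1 w : PP1 w. Proof. exact: (nf_main (ltnSn (size w))).1. Qed.
Lemma nfP2 w : PP2 w. Proof. exact: (nf_main (ltnSn (size w))).2. Qed.

Lemma req_nf w w' : req w w' -> forall u u', nf w u -> nf w' u' -> size u = size u'.
Proof.
elim=> [x y s|x|x y _ IH|x y z _ IH1 _ IH2] u u' n1 n2.
- case: s n1 n2 => [u0 v0 a|u0 v0 a b hab] n1 n2.
    apply: (nfP1 n1); apply: nf_step n2.
    by apply: (cstepI (p:=u0) (m:=[::]) (q:=v0) (a:=a)).
  apply: (nfP2 _ n1 n2).
  by apply: (swap1I (p:=u0) (q:=v0) (a:=a) (b:=b)).
- exact: nfP1 n1 n2.
- by symmetry; apply: IH.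
- have [uy ny] := nf_exists y.
  by rewrite (IH1 u uy) // (IH2 uy u').
Qed.

Lemma irr_reduced w : irr w -> reduced e w.
Proof.
move=> hi w' hr.
have [u' n'] := nf_exists w'.
have nw : nf w w by split => //; apply: rt_refl.
rewrite (req_nf hr nw n'); exact: crt_size n'.1.
Qed.

Lemma reduced_irr w : reduced e w -> irr w.
Proof.
move=> hr z s; have := hr z (cstep_req s).
by rewrite (cstep_size s) => /(leq_trans (leqnSn _)); rewrite ltnn.
Qed.

Lemma notred_step w : ~ reduced e w -> exists z, cstep w z.
Proof. by move=> h; apply: not_irr => hi; apply: h; apply: irr_reduced. Qed.

Lemma reduced_factor p s q : reduced e (p ++ s ++ q) -> reduced e s.
Proof.
move=> h s' hs; have := h _ (req_ctx p q hs).
by rewrite !size_cat leq_add2l leq_add2r.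
Qed.

Lemma req_gen_move (x : letter T) m : adjw x.1 m -> req (x :: m) (m ++ [:: x]).
Proof. by move=> h; have := sst_req (move_right h [::] [::]); rewrite /= cats0. Qed.

Lemma centr t : forall z, reduced e z -> req (gen t ++ z) (z ++ gen t) ->
  all (fun a : letter T => (a.1 == t) || e t a.1) z.
Proof.
move=> z; move: {2}(size z) (leqnn (size z)) => n; elim: n z => [|n IH] z hn hr hc.
  by move: hn; rewrite leqn0 => /nilP ->.
have hW : req ((t, true) :: z ++ [:: (t, false)]) z.
  have := req_ctx [::] [:: (t, false)] hc; rewrite /= => h.
  apply: req_trans h _.
  have := req_ctx z [::] (req_cancel (gen t)); by rewrite /= !cats0 -catA.
have [y hy] : exists y, cstep ((t, true) :: z ++ [:: (t, false)]) y.
  apply: notred_step => hr'; have := hr' _ hW.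
  by rewrite /= size_cat addn1 => /(leq_trans (leqnSn _)); rewrite ltnn.
case: hy => p [m [q [a [E hm _]]]].
have adj_st : forall u, adjw t u -> all (fun a : letter T => (a.1 == t) || e t a.1) u.
  by move=> u; apply: sub_all => x /= ->; rewrite orbT.
case: p E => [|c p] /= E.
- case: E => Ea E; subst a.
  case: (cat_cons_eq E) => {E} [[E1 _ _]|[s [_ E2]]|[s [E1 E2]]].
  + by subst m; apply: adj_st.
  + by case: s E2.
  + subst z.
    have hs : req (gen t ++ s) (s ++ gen t).
      have h1 : req (gen t ++ m ++ (t, false) :: s) (m ++ s).
        apply: (@req_trans _ ((m ++ [:: (t, true)]) ++ (t, false) :: s)).
          by have := req_ctx [::] ((t, false) :: s) (req_gen_move hm); rewrite /= -!catA.
        rewrite -catA /=; apply: rst_step.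
        by have := step_cancel e m s (t, true).
      have h2 := req_trans (req_sym h1) hc.
      rewrite -catA /= in h2.
      have h3 : req s ((t, false) :: s ++ gen t).
        by apply: (req_lcancel (p:=m)).
      apply: req_trans (req_cat (req_refl (gen t)) h3) _.
      apply: rst_step.
      by have := step_cancel e [::] (s ++ gen t) (t, true).
    have hrs : reduced e s by apply: (reduced_factor (p:=m ++ [:: (t, false)]) (q:=[::])); rewrite cats0 -catA.
    have hsz : size s <= n.
      by move: hn; rewrite size_cat /= addnS ltnS => /(leq_trans (leq_addl _ _)).
    rewrite all_cat /= eqxx /= (IH s hsz hrs hs) andbT; exact: adj_st.
- case: E => Ec E; subst c.
  case: (lastP q) E => [|q' yl] E.
  + have E' : rcons z (t, false) = rcons (p ++ a :: m) (linv a) by rewrite -!cats1 E -catA.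
    have Ez := congr1 fst (rcons_inj E'); have Ea := congr1 snd (rcons_inj E').
    rewrite /= in Ez Ea; subst z.
    have Ea' : a = (t, true) by rewrite -(linvK a) -Ea.
    subst a.
    have hp : req (gen t ++ p) (p ++ gen t).
      have h1 : req (p ++ (t, true) :: m ++ gen t) ((p ++ [:: (t, true); (t, true)]) ++ m).
        have := req_ctx (p ++ [:: (t, true)]) [::] (req_sym (req_gen_move hm)).
        cx.
      rewrite -catA /= in hc; have h2 := req_trans hc h1.
      have h3 : req (gen t ++ p ++ [:: (t, true)]) (p ++ [:: (t, true); (t, true)]).
        by apply: (req_rcancel (p:=m)); move: h2; cx.
      by apply: (req_rcancel (p:=[:: (t, true)])); move: h3; cx.
    have hrp : reduced e p by apply: (reduced_factor (p:=[::]) (q:=(t, true) :: m)).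
    have hsz : size p <= n.
      by move: hn; rewrite size_cat /= addnS ltnS => /(leq_trans (leq_addr _ _)).
    rewrite all_cat (IH p hsz hrp hp) /= eqxx /=; exact: adj_st.
  + exfalso.
    have E' : rcons z (t, false) = rcons (p ++ a :: m ++ linv a :: q') yl.
      by rewrite -cats1 E !rcons_cat /= !rcons_cat.
    have Ez := congr1 fst (rcons_inj E'); rewrite /= in Ez.
    apply: (reduced_irr hr (w' := p ++ m ++ q')).
    by rewrite Ez; apply: (cstepI (p:=p) (m:=m) (q:=q') (a:=a)).
Qed.

Lemma cstep_winv w z : cstep w z -> cstep (winv w) (winv z).
Proof.
case=> p [m [q [a [-> hm ->]]]].
apply: (cstepI (p:=winv q) (m:=winv m) (q:=winv p) (a:=a)).
- rewrite !(winv_cat, winv_cons) ?linvK; ceq.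
- rewrite !winv_cat; ceq.
- by rewrite adjw_winv.
Qed.

Section Shrink.
Variable v : T.

Definition shrinkP (L : word) := exists L'', [/\ subseq L'' L, size L'' < size L &
  req (L'' ++ gen v ++ winv L'') (L ++ gen v ++ winv L)].

Lemma shrink_a L z : cstep L z -> shrinkP L.
Proof.
move=> s; exists z; split.
- case: s => p [m [q [a [-> hm ->]]]].
  apply: cat_subseq (subseq_refl p) _.
  apply: subseq_trans (subseq_cons _ a).
  exact: cat_subseq (subseq_refl m) (subseq_cons q (linv a)).
- by rewrite (cstep_size s).
- have h := req_sym (cstep_req s).
  exact: req_cat h (req_cat (req_refl _) (req_winv h)).
Qed.

Lemma mid_gen B : adjw v B -> req (B ++ gen v ++ winv B) (gen v).
Proof.
move=> hB.
have h1 : req (B ++ gen v) (gen v ++ B) by apply: req_sym; apply: (req_gen_move (x:=(v,true))).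
have := req_cat h1 (req_refl (winv B)); rewrite -!catA => h2.
apply: req_trans h2 _.
by have := req_cat (req_refl (gen v)) (req_cancel B); rewrite cats0.
Qed.

Lemma shrink_c1 L A c B : L = A ++ c :: B -> c.1 = v -> adjw v B -> shrinkP L.
Proof.
move=> -> hc hB; exists A; split.
- exact: prefix_subseq.
- by rewrite size_cat /= addnS ltnS leq_addr.
- have core : req (gen v) (c :: (B ++ gen v ++ winv B) ++ [:: linv c]).
    apply: req_trans (_ : req _ (c :: gen v ++ [:: linv c])) _.
      case: c hc => c1 [] /= ->.
        apply: req_sym; apply: rst_step.
        by have := step_cancel e [:: (v, true)] [::] (v, true).
      apply: req_sym; apply: rst_step.
      by have := step_cancel e [::] [:: (v, true)] (v, false).
    have := req_ctx [:: c] [:: linv c] (req_sym (mid_gen hB)); by rewrite /=.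
  have := req_ctx A (winv A) core.
  rewrite !(winv_cat, winv_cons); cx.
Qed.

Lemma shrink_c3 L p a s : L = p ++ a :: s -> adjw a.1 s -> e a.1 v -> shrinkP L.
Proof.
move=> -> hs hv; exists (p ++ s); split.
- exact: cat_subseq (subseq_refl p) (subseq_cons s a).
- by rewrite !size_cat /= addnS ltnS.
- have hX : adjw a.1 (s ++ gen v ++ winv s) by rewrite !adjw_cat adjw_winv hs /= hv.
  have core : req (s ++ gen v ++ winv s) (a :: (s ++ gen v ++ winv s) ++ [:: linv a]).
    apply: req_sym; apply: cstep_req.
    apply: (cstepI (p:=[::]) (m:=s ++ gen v ++ winv s) (q:=[::]) (a:=a)) => //; ceq.
  have := req_ctx p (winv p) core.
  rewrite !(winv_cat, winv_cons); cx.
Qed.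

Lemma shrink L y : cstep (L ++ gen v ++ winv L) y -> shrinkP L.
Proof.
case=> p [m [q [a [E hm _]]]].
have E' : L ++ (v, true) :: winv L = p ++ a :: m ++ linv a :: q := E.
case: (cat_cons_eq E') => {E E'} [[E1 Ea E3]|[s [E1 E2]]|[s [E1 E2]]].
- subst p a.
  apply: (shrink_c1 (A:=winv q) (c:=(v, true)) (B:=winv m)) => //.
    by rewrite -(winvK L) E3 winv_cat winv_cons /=; ceq.
  by rewrite adjw_winv.
- have h : cstep (winv L) (s ++ m ++ q).
    by rewrite E2; apply: (cstepI (p:=s) (m:=m) (q:=q) (a:=a)).
  have := cstep_winv h; rewrite winvK; exact: shrink_a.
- case: (cat_cons_eq E2) => {E2} [[Em Ea Eq]|[t [Es Eq]]|[t [Em Eq]]].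
  + have Ea1 := congr1 fst Ea; rewrite /= in Ea1.
    apply: (shrink_c1 (A:=p) (c:=a) (B:=s)) => //.
    by rewrite -Ea1 -Em.
  + apply: (shrink_a (z:=p ++ m ++ t)).
    by rewrite E1 Es; apply: (cstepI (p:=p) (m:=m) (q:=t) (a:=a)).
  + subst m; apply: (shrink_c3 (p:=p) (a:=a) (s:=s)) => //; by adjt.
Qed.

Lemma conj_min (P : word -> Prop) : (forall L L', P L -> subseq L' L -> P L') ->
  forall L, P L -> exists L', [/\ P L', reduced e (L' ++ gen v ++ winv L') &
    req (L' ++ gen v ++ winv L') (L ++ gen v ++ winv L)].
Proof.
move=> Pc L; move: {2}(size L) (leqnn (size L)) => n; elim: n L => [|n IH] L hn hP.
  case: (classic (reduced e (L ++ gen v ++ winv L))) => hr.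
    by exists L; split => //; apply: req_refl.
  have [y hy] := notred_step hr; have [L'' [hs hsz hq]] := shrink hy.
  by have := leq_trans hsz hn.
case: (classic (reduced e (L ++ gen v ++ winv L))) => hr.
  by exists L; split => //; apply: req_refl.
have [y hy] := notred_step hr; have [L'' [hs hsz hq]] := shrink hy.
have [L' [hP' hr' hq']] := IH L'' (leq_trans hsz hn) (Pc _ _ hP hs).
by exists L'; split => //; apply: req_trans hq' hq.
Qed.

End Shrink.

Lemma last_occ t h : all (fun a : letter T => (a.1 == t) || e t a.1) h ->
  adjw t h \/ exists h1 c h2, [/\ h = h1 ++ c :: h2, c.1 = t & adjw t h2].
Proof.
elim: h => [|x h IH] /=; first by left.
case/andP => hx /IH [hl|[h1 [c [h2 [-> Ec hl]]]]].
- case: (boolP (x.1 == t)) => Ex.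
    by right; exists [::], x, h; split => //; apply/eqP.
  by left; move: hx; rewrite (negPf Ex) /= => hx; by apply/andP; split.
- by right; exists (x :: h1), c, h2.
Qed.

Lemma conj_shift h g X :
  req (h ++ ((winv h ++ g) ++ X ++ winv (winv h ++ g)) ++ winv h) (g ++ X ++ winv g).
Proof.
rewrite winv_cat winvK.
apply: (@req_trans _ (g ++ X ++ winv g ++ h ++ winv h)).
  by have := req_ctx [::] (g ++ X ++ winv g ++ h ++ winv h) (req_cancel h); cx.
by have := req_ctx (g ++ X ++ winv g) [::] (req_cancel h); cx.
Qed.

Lemma conj_collapse h X Y :
  req ((h ++ X ++ winv h) ++ (h ++ Y ++ winv h)) (h ++ (X ++ Y) ++ winv h).
Proof. by have := req_ctx (h ++ X) (Y ++ winv h) (req_cancel' h); cx. Qed.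

Lemma conj_comm h X Y :
  req ((h ++ X ++ winv h) ++ (h ++ Y ++ winv h)) ((h ++ Y ++ winv h) ++ (h ++ X ++ winv h)) ->
  req (X ++ Y) (Y ++ X).
Proof.
move=> H.
have H2 := req_trans (req_sym (conj_collapse h X Y)) (req_trans H (conj_collapse h Y X)).
apply: (req_rcancel (p:=winv h)); apply: (req_lcancel (p:=h)); move: H2; cx.
Qed.

Lemma good_subseq (S1 S2 : pred T) (L L' : word) :
  (exists x y, [/\ L = x ++ y, word_over S1 x & word_over S2 y]) -> subseq L' L ->
  exists x y, [/\ L' = x ++ y, word_over S1 x & word_over S2 y].
Proof.
move=> [x [y [-> hx hy]]] /subseqP [m hm ->].
exists (mask (take (size x) m) x), (mask (drop (size x) m) y); split.
- rewrite -mask_cat ?cat_take_drop //.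
  by rewrite size_take_min hm size_cat; apply/minn_idPl; exact: leq_addr.
- exact: all_mask.
- exact: all_mask.
Qed.

End Basics.

Ltac ceqn := do 4! (rewrite /= -?catA /= ?cats0).
Ltac ceq := ceqn; done.

Theorem lemma5p3 (T : finType) (e : rel T)
  (e_sym : symmetric e) (e_irr : irreflexive e)
  (v1 v2 v3 : T)
  (h12 : e v1 v2) (h23 : e v2 v3)
  (hd13 : v1 != v3 /\ ~~ e v1 v3) (* d(v1, v3) = 2, given the path v1 - v2 - v3 *)
  (f : T -> word T)
  (hf : is_automorphism e f) (hc : conjugating e f)
  (hfix : raag_eq e (f v1) (gen v1)) :
  (exists w : word T,
      in_subgroup e (lk e v1) w /\
      reduced e (w ++ gen v2 ++ winv w) /\
      raag_eq e (f v2) (w ++ gen v2 ++ winv w)) /\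
  (exists x y : word T,
      in_subgroup e (lk e v1) x /\ in_subgroup e (st e v2) y /\
      reduced e (x ++ y ++ gen v3 ++ winv y ++ winv x) /\
      raag_eq e (f v3) (x ++ y ++ gen v3 ++ winv y ++ winv x)).
Proof.
have [hcomm _] := hf.
have Pt : forall L L' : word T, True -> subseq L' L -> True by [].
have [g2 hg2] := hc v2.
have [h [_ hrh hqh]] := conj_min e_sym e_irr v2 Pt (L:=g2) I.
have hf2 : raag_eq e (f v2) (h ++ gen v2 ++ winv h) := req_trans hg2 (req_sym hqh).
have hcom1 : raag_eq e (gen v1 ++ (h ++ gen v2 ++ winv h)) ((h ++ gen v2 ++ winv h) ++ gen v1).
  apply: req_trans (req_cat (req_sym hfix) (req_sym hf2)) _.
  exact: req_trans (hcomm v1 v2 h12) (req_cat hf2 hfix).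
have hst := centr e_sym e_irr hrh hcom1.
rewrite all_cat in hst; case/andP: hst => hsth _.
have hlk : adjw e v1 h.
  case: (last_occ hsth) => [//|[h1 [c [h2 [Eh Ec hl]]]]].
  exfalso; have Hi : irr e (h ++ gen v2 ++ winv h) by apply: reduced_irr. apply: (Hi (h1 ++ (h2 ++ gen v2 ++ winv h2) ++ winv h1)).
  apply: (cstepI (p:=h1) (m:=h2 ++ gen v2 ++ winv h2) (q:=winv h1) (a:=c)).
  - rewrite Eh !(winv_cat, winv_cons); ceq.
  - done.
  - by rewrite Ec !adjw_cat adjw_winv hl /= h12.
split.
  exists h; split; first by exists h; split => //; apply: req_refl.
  by split.
have [g3 hg3] := hc v3.
have [h3 [_ hr3 hq3]] := conj_min e_sym e_irr v3 Pt (L:=winv h ++ g3) I.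
have hf3 : raag_eq e (f v3) (h ++ (h3 ++ gen v3 ++ winv h3) ++ winv h).
  apply: req_trans hg3 _; apply: req_sym.
  exact: req_trans (req_ctx h (winv h) hq3) (conj_shift e h g3 (gen v3)).
have hcom2 : raag_eq e (gen v2 ++ (h3 ++ gen v3 ++ winv h3)) ((h3 ++ gen v3 ++ winv h3) ++ gen v2).
  apply: (conj_comm (h:=h)).
  apply: req_trans (req_cat (req_sym hf2) (req_sym hf3)) _.
  exact: req_trans (hcomm v2 v3 h23) (req_cat hf3 hf2).
have hst3 := centr e_sym e_irr hr3 hcom2.
rewrite all_cat in hst3; case/andP: hst3 => hsth3 _.
have Pc := @good_subseq T (lk e v1) (st e v2).
have hP : exists x y, [/\ h ++ h3 = x ++ y, word_over (lk e v1) x & word_over (st e v2) y].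
  by exists h, h3.
have [L' [[x [y [EL hx hy]]] hrL hqL]] := conj_min e_sym e_irr v3 Pc hP.
subst L'.
exists x, y; split; first by exists x; split => //; apply: req_refl.
split; first by exists y; split => //; apply: req_refl.
have E : forall a b : word T, a ++ b ++ gen v3 ++ winv b ++ winv a = (a ++ b) ++ gen v3 ++ winv (a ++ b).
  by move=> a b; rewrite winv_cat -!catA.
rewrite E; split => //.
apply: req_trans hf3 _; apply: req_sym; apply: req_trans hqL _.
rewrite winv_cat -!catA; apply: req_refl.
Qed.
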